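(* Let $R$ be a non-zero commutative ring and $(A,G)\in\mathcal{D}(R)$. If $(A,G)$ is a maximal element of $\mathcal{D}(R)$, then $A$ is stark. If $R$ is a connected order, the converse also holds: if $A$ is stark then $(A,G)$ is maximal in $\mathcal{D}(R)$.
   Context: All rings have a unit element. For a commutative ring $R$, $\mathcal{D}(R)$ is the set of pairs $(A,G)$ with $A\subset R$ a subring and $G\subset R^*$ a subgroup such that the natural map from the group ring $A[G]$ to $R$ is a ring isomorphism, partially ordered by $(B,H)\leq(A,G)$ iff $H\subset G$ and $B\supset A$. A commutative ring is stark if there do not exist a ring $B$ and a non-trivial group $H$ with it isomorphic to $B[H]$. An order is a commutative ring whose additive group is isomorphic to $\mathbb{Z}^n$ for some $n\ge 0$; it is connected if it has exactly two idempotents. *)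

(* Defs.v *)
From HB Require Import structures.
From mathcomp Require Import all_boot all_order all_algebra.
From Stdlib Require List.
Set Implicit Arguments.
Unset Strict Implicit.
Unset Printing Implicit Defensive.
Import Order.TTheory GRing.Theory Num.Theory.
Local Open Scope ring_scope.

Definition unit_subgroup (R : comNzRingType) (G : pred R) : Prop :=
  [/\ {in G, forall x, exists y : R, x * y = 1}, 1 \in G,
      {in G &, forall x y, x * y \in G} &
      {in G, forall x, exists2 y : R, y \in G & x * y = 1}].

(* The natural map A[G] -> R, sum_g a_g [g] |-> sum_g a_g g, is bijective.
   An element of A[G] is given by a duplicate-free list s of elements of G
   (containing its support) and coefficients c g in A. *)
Definition natmap_surj (R : comNzRingType) (A G : pred R) : Prop :=
  forall r : R, exists (s : seq R) (c : R -> R),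
    [/\ {subset s <= G}, {in s, forall g, c g \in A} &
        r = \sum_(g <- s) c g * g].

Definition natmap_inj (R : comNzRingType) (A G : pred R) : Prop :=
  forall (s : seq R) (c : R -> R), uniq s -> {subset s <= G} ->
    {in s, forall g, c g \in A} ->
    \sum_(g <- s) c g * g = 0 -> {in s, forall g, c g = 0}.

Definition inD (R : comNzRingType) (A G : pred R) : Prop :=
  [/\ GRing.subring_closed A, unit_subgroup G,
      natmap_surj A G & natmap_inj A G].

(* (B, H) <= (A, G)  iff  H \subset G and B \supset A *)
Definition leD (R : comNzRingType) (B H A G : pred R) : Prop :=
  {subset H <= G} /\ {subset A <= B}.

Definition maximalD (R : comNzRingType) (A G : pred R) : Prop :=
  inD A G /\
  forall B H : pred R, inD B H -> leD A G B H -> (B =i A /\ H =i G).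

Record group_on (H : Type) := GroupOn {
  gmul : H -> H -> H;
  gone : H;
  ginv : H -> H;
  gmulA : forall x y z, gmul x (gmul y z) = gmul (gmul x y) z;
  gmul1 : forall x, gmul gone x = x;
  gmulV : forall x, gmul (ginv x) x = gone
}.

(* The ring S (a subring of T, given as a predicate; S = T when S = predT)
   is isomorphic to the group ring B[H]: there are a ring morphism f : B -> T
   and a group morphism j : H -> T, both with values in S, such that the
   induced map B[H] -> S, sum_h b_h [h] |-> sum_h f(b_h) j(h), is bijective.
   An element of B[H] is given by a duplicate-free list l of elements of H
   (containing its support) and coefficients c : H -> B. *)
Definition group_ring_iso (T : nzRingType) (S : pred T)
    (B : nzRingType) (H : Type) (g : group_on H)
    (f : {rmorphism B -> T}) (j : H -> T) : Prop :=
  [/\ (forall b, f b \in S), (forall h, j h \in S),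
      (forall x y, j (gmul g x y) = j x * j y) /\ j (gone g) = 1,
      (forall t, t \in S -> exists (l : seq H) (c : H -> B),
          t = \sum_(h <- l) f (c h) * j h) &
      (forall (l : seq H) (c : H -> B), List.NoDup l ->
          \sum_(h <- l) f (c h) * j h = 0 -> forall h, List.In h l -> c h = 0)].

Definition stark_in (T : nzRingType) (S : pred T) : Prop :=
  ~ exists (B : nzRingType) (H : Type) (g : group_on H)
           (f : {rmorphism B -> T}) (j : H -> T),
      (exists h : H, h <> gone g) /\ group_ring_iso S g f j.

Definition stark (T : nzRingType) : Prop := stark_in (@predT T).

Definition is_order (R : comNzRingType) : Prop :=
  exists (n : nat) (phi : {additive 'rV[int]_n -> R}), bijective phi.

Definition connected_ring (R : comNzRingType) : Prop :=
  exists x y : R, [/\ x <> y, x * x = x, y * y = y &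
    forall e : R, e * e = e -> e = x \/ e = y].

(* Main.v *)
Require Import Defs.
From HB Require Import structures.
From mathcomp Require Import all_boot all_order all_algebra.
From Stdlib Require List ClassicalEpsilon.
Set Implicit Arguments.
Unset Strict Implicit.
Unset Printing Implicit Defensive.
Import Order.TTheory GRing.Theory Num.Theory.
Local Open Scope ring_scope.


Definition pb (P : Prop) : bool :=
  if ClassicalEpsilon.excluded_middle_informative P then true else false.
Lemma pbP (P : Prop) : reflect P (pb P).
Proof. rewrite /pb; case: ClassicalEpsilon.excluded_middle_informative => h; by constructor. Qed.

Definition pickf {X Y : Type} (y0 : Y) (P : X -> Y -> Prop) (x : X) : Y :=
  match ClassicalEpsilon.excluded_middle_informative (exists y, P x y) with
  | left e => proj1_sig (ClassicalEpsilon.constructive_indefinite_description _ e)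
  | right _ => y0 end.
Lemma pickfP {X Y : Type} (y0 : Y) (P : X -> Y -> Prop) (x : X) :
  (exists y, P x y) -> P x (pickf y0 P x).
Proof.
rewrite /pickf; case: ClassicalEpsilon.excluded_middle_informative => // e _.
exact: proj2_sig (ClassicalEpsilon.constructive_indefinite_description _ e).
Qed.

Lemma uniq_pick (V : nmodType) (K : eqType) (u : seq K) x (F : K -> V) :
  uniq u -> x \in u -> \sum_(k <- u | k == x) F k = F x.
Proof.
elim: u => //= y u IH /andP[yu uu]; rewrite in_cons big_cons => /orP[/eqP ey|xu].
  subst y; rewrite eqxx big_seq_cond big1 ?addr0 // => k /andP[ku /eqP ek].
  by subst k; rewrite ku in yu.
case: eqP => [ey|_]; last exact: IH.
by subst y; rewrite xu in yu.
Qed.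

Lemma regroup (V : nmodType) (I K : eqType) (s : I -> K) (F : I -> V) (L : seq I) :
  \sum_(i <- L) F i = \sum_(k <- undup (map s L)) \sum_(i <- L | s i == k) F i.
Proof.
under [RHS]eq_bigr => k _ do rewrite big_mkcond.
rewrite exchange_big /=; apply: eq_big_seq => i iL.
rewrite -big_mkcond /=.
under eq_bigl => k do rewrite eq_sym.
by rewrite (@uniq_pick V K _ (s i) (fun _ => F i)) ?undup_uniq // mem_undup map_f.
Qed.

Lemma In_mem (T : eqType) (x : T) (l : seq T) : List.In x l -> x \in l.
Proof. elim: l => //= y l IH [->|h]; rewrite in_cons; [by rewrite eqxx | by rewrite IH ?orbT]. Qed.
Lemma mem_In (T : eqType) (x : T) (l : seq T) : x \in l -> List.In x l.
Proof. elim: l => [|y l IH]; first by rewrite in_nil. rewrite in_cons => /orP[/eqP->|h]; [left|right; exact: IH]; done. Qed.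
Lemma In_map_mem (T : eqType) (K : Type) (s : T -> K) (l : seq T) x :
  x \in l -> List.In (s x) (map s l).
Proof.
elim: l => [|y l IH]; first by rewrite in_nil.
rewrite in_cons => /orP[/eqP->|h] /=; [left | right; exact: IH]; done.
Qed.
Lemma NoDup_uniq (T : eqType) (l : seq T) : List.NoDup l -> uniq l.
Proof.
elim: l => //= x l IH h; inversion h; subst.
rewrite IH // andbT; apply/negP => /mem_In; done.
Qed.
Lemma uniq_NoDup_map (T : eqType) (K : Type) (s : T -> K) (l : seq T) :
  uniq l -> {in l &, injective s} -> List.NoDup (map s l).
Proof.
elim: l => /= [|x l IH]; first by constructor.
move=> /andP[xl ul] inj; constructor.
  move=> /List.in_map_iff [y [e yl]].
  have yl' := In_mem yl.
  have ey : y = x by apply: inj; rewrite // !in_cons ?eqxx ?yl' ?orbT.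
  by subst y; rewrite yl' in xl.
apply: IH => // a b al bl; apply: inj; by rewrite in_cons ?al ?bl orbT.
Qed.

Arguments pickfP {X Y} y0 P x.

Lemma all_flat (T : eqType) (U : Type) (a : pred U) (F : T -> seq U) (L : seq T) :
  (forall i, i \in L -> all a (F i)) -> all a (flatten (map F L)).
Proof.
elim: L => //= i L IH h; rewrite all_cat h ?mem_head // IH // => k kL.
by apply: h; rewrite in_cons kL orbT.
Qed.

Section Closure.
Variables (R : comNzRingType) (S : pred R) (hS : GRing.subring_closed S).
Lemma sc1 : 1 \in S. Proof. by case: hS. Qed.
Lemma scB x y : x \in S -> y \in S -> x - y \in S. Proof. by case: hS => _ h _; apply: h. Qed.
Lemma scM x y : x \in S -> y \in S -> x * y \in S. Proof. by case: hS => _ _ h; apply: h. Qed.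
Lemma sc0 : 0 \in S. Proof. by rewrite -(subrr 1) scB ?sc1. Qed.
Lemma scN x : x \in S -> - x \in S. Proof. by move=> h; rewrite -sub0r scB ?sc0. Qed.
Lemma scD x y : x \in S -> y \in S -> x + y \in S. Proof. by move=> hx hy; rewrite -[y]opprK scB ?scN. Qed.
Lemma scSum (I : Type) (r : seq I) (P : pred I) (F : I -> R) :
  (forall i, P i -> F i \in S) -> \sum_(i <- r | P i) F i \in S.
Proof. move=> h; apply: (big_ind (fun x => x \in S)) => //; [exact: sc0 | exact: scD]. Qed.
Lemma scSumSeq (I : eqType) (r : seq I) (P : pred I) (F : I -> R) :
  (forall i, i \in r -> P i -> F i \in S) -> \sum_(i <- r | P i) F i \in S.
Proof. move=> h; rewrite big_seq_cond; apply: scSum => i /andP[]; exact: h. Qed.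
End Closure.

Section Pairs.
Variables (R : comNzRingType) (A G : pred R).
Definition psum (L : seq (R * R)) := \sum_(i <- L) i.1 * i.2.
Definition pok (L : seq (R * R)) := all (fun i => (i.1 \in A) && (i.2 \in G)) L.

Lemma psum_regroup L : psum L =
  \sum_(y <- undup (map snd L)) (\sum_(i <- L | i.2 == y) i.1) * y.
Proof.
rewrite /psum (regroup snd); apply: eq_bigr => y _; rewrite mulr_suml.
by apply: eq_bigr => i /eqP ->.
Qed.

Lemma surj_pairs : natmap_surj A G -> forall r, exists L, pok L /\ r = psum L.
Proof.
move=> hs r; have [s [c [sG cA ->]]] := hs r.
exists [seq (c g, g) | g <- s]; split; last by rewrite /psum big_map.
by apply/allP => _ /mapP[g gs ->] /=; rewrite cA ?sG.
Qed.

Hypothesis hA : GRing.subring_closed A.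

Lemma pairs_surj : (forall r, exists L, pok L /\ r = psum L) -> natmap_surj A G.
Proof.
move=> h r; have [L [ok ->]] := h r.
exists (undup (map snd L)), (fun y => \sum_(i <- L | i.2 == y) i.1); split.
- move=> y; rewrite mem_undup => /mapP[i iL ->].
  by have /andP[] := allP ok i iL.
- move=> y _; apply: scSumSeq => // i iL _.
  by have /andP[] := allP ok i iL.
- exact: psum_regroup.
Qed.

Lemma GI : natmap_inj A G -> forall L, pok L -> psum L = 0 ->
  forall Q : pred R, \sum_(i <- L | Q i.2) i.1 = 0.
Proof.
move=> hi L ok h0 Q.
set s := undup (map snd L).
set c := fun y => \sum_(i <- L | i.2 == y) i.1.
have hc : {in s, forall y, c y = 0}.
  apply: hi; first exact: undup_uniq.
  - move=> y; rewrite mem_undup => /mapP[i iL ->].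
    by have /andP[] := allP ok i iL.
  - move=> y _; apply: scSumSeq => // i iL _.
    by have /andP[] := allP ok i iL.
  - by rewrite -psum_regroup.
rewrite big_mkcond (regroup snd) /=; apply: big1_seq => y /andP[_ ys].
under eq_bigr => i /eqP e do rewrite e.
case: (Q y); first exact: hc.
by rewrite big1.
Qed.
End Pairs.


Section Part1.
Variables (R : comNzRingType) (A G : pred R) (HAG : inD A G).
Variables (B0 : nzRingType) (K : Type) (gK : group_on K) (f : {rmorphism B0 -> R}) (j : K -> R).
Hypothesis Hiso : group_ring_iso A gK f j.

Let hA : GRing.subring_closed A := let: And4 h _ _ _ := HAG in h.
Let hG : unit_subgroup G := let: And4 _ h _ _ := HAG in h.
Let hsurj : natmap_surj A G := let: And4 _ _ h _ := HAG in h.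
Let hinj : natmap_inj A G := let: And4 _ _ _ h := HAG in h.
Let fA : forall b, f b \in A := let: And5 h _ _ _ _ := Hiso in h.
Let jA : forall k, j k \in A := let: And5 _ h _ _ _ := Hiso in h.
Let jM : forall x y, j (gmul gK x y) = j x * j y := let: And5 _ _ (conj h _) _ _ := Hiso in h.
Let j1 : j (gone gK) = 1 := let: And5 _ _ (conj _ h) _ _ := Hiso in h.
Let jsurj := let: And5 _ _ _ h _ := Hiso in h.
Let jinj := let: And5 _ _ _ _ h := Hiso in h.
Let G1 : 1 \in G := let: And4 _ h _ _ := hG in h.
Let GM : {in G &, forall x y, x * y \in G} := let: And4 _ _ h _ := hG in h.
Let GV : {in G, forall x, exists2 y, y \in G & x * y = 1} := let: And4 _ _ _ h := hG in h.

Definition B' : pred R := fun x => pb (exists b, x = f b).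
Definition H' : pred R := fun x => pb (exists k y, y \in G /\ x = j k * y).

Lemma inB' x : reflect (exists b, x = f b) (x \in B').
Proof. exact: pbP. Qed.
Lemma inH' x : reflect (exists k y, y \in G /\ x = j k * y) (x \in H').
Proof. exact: pbP. Qed.

Lemma B'ring : GRing.subring_closed B'.
Proof.
split.
- by apply/inB'; exists 1; rewrite rmorph1.
- by move=> _ _ /inB'[b1 ->] /inB'[b2 ->]; apply/inB'; exists (b1 - b2); rewrite rmorphB.
- by move=> _ _ /inB'[b1 ->] /inB'[b2 ->]; apply/inB'; exists (b1 * b2); rewrite rmorphM.
Qed.

Lemma jinv k : j (ginv gK k) * j k = 1.
Proof. by rewrite -jM gmulV j1. Qed.

Lemma H'V : {in H', forall x, exists2 y, y \in H' & x * y = 1}.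
Proof.
move=> _ /inH'[k [u [uG ->]]]; have [v vG uv] := GV uG.
exists (j (ginv gK k) * v); first by apply/inH'; exists (ginv gK k), v.
by rewrite mulrACA [j k * _]mulrC jinv uv mulr1.
Qed.

Lemma H'group : unit_subgroup H'.
Proof.
split.
- by move=> x /H'V [y _ e]; exists y.
- by apply/inH'; exists (gone gK), 1; rewrite j1 mulr1.
- move=> _ _ /inH'[k1 [u1 [u1G ->]]] /inH'[k2 [u2 [u2G ->]]].
  by apply/inH'; exists (gmul gK k1 k2), (u1 * u2); rewrite GM // jM mulrACA.
- exact: H'V.
Qed.

Definition rep (a : R) : seq K * (K -> B0) :=
  pickf ([::], fun _ => 0) (fun a lc => a = \sum_(k <- lc.1) f (lc.2 k) * j k) a.

Lemma repP a : a \in A -> a = \sum_(k <- (rep a).1) f ((rep a).2 k) * j k.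
Proof.
move=> aA; apply: (pickfP _ (fun a (lc : seq K * (K -> B0)) =>
   a = \sum_(k <- lc.1) f (lc.2 k) * j k) a).
have [l [c e]] := jsurj aA; by exists (l, c).
Qed.

Lemma H'surj : natmap_surj B' H'.
Proof.
apply: pairs_surj; first exact: B'ring.
move=> r; have [L [ok ->]] := surj_pairs hsurj r.
exists (flatten [seq [seq (f ((rep i.1).2 k), j k * i.2) | k <- (rep i.1).1] | i <- L]).
split.
  apply: all_flat => i iL.
  have /andP[_ iG] := allP ok i iL.
  elim: (rep i.1).1 => //= k l -> ; rewrite andbT.
  apply/andP; split; first by apply/inB'; eexists.
  by apply/inH'; exists k, i.2.
rewrite /psum big_flatten big_map /=; apply: eq_big_seq => i iL.
have /andP[iA _] := allP ok i iL.
rewrite big_map {1}(repP iA) mulr_suml; apply: eq_bigr => k _ /=.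
by rewrite mulrA.
Qed.

Definition bsel (c : R -> R) (x : R) : B0 := pickf 0 (fun x b => c x = f b) x.
Definition kg (x : R) : K * R :=
  pickf (gone gK, 1) (fun x p => p.2 \in G /\ x = j p.1 * p.2) x.

Lemma bselP c x : c x \in B' -> c x = f (bsel c x).
Proof.
move=> /inB' h; exact: (pickfP _ (fun x b => c x = f b) x h).
Qed.
Lemma kgP x : x \in H' -> (kg x).2 \in G /\ x = j (kg x).1 * (kg x).2.
Proof.
move=> /inH'[k [u h]].
apply: (pickfP _ (fun x (p : K * R) => p.2 \in G /\ x = j p.1 * p.2) x).
by exists (k, u).
Qed.

Lemma H'inj : natmap_inj B' H'.
Proof.
move=> s c us sH cB sum0 x0 x0s.
set M := [seq (f (bsel c x) * j (kg x).1, (kg x).2) | x <- s].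
have okM : pok A G M.
  apply/allP => _ /mapP[x xs ->] /=.
  have [kG _] := kgP (sH x xs).
  by rewrite kG andbT (scM hA) ?fA ?jA.
have psM : psum M = 0.
  rewrite /psum big_map -[RHS]sum0; apply: eq_big_seq => x xs /=.
  have [_ e] := kgP (sH x xs).
  by rewrite -mulrA -e -bselP ?cB.
set g0 := (kg x0).2.
have := GI hA hinj okM psM (pred1 g0).
rewrite big_map /= => hsum.
set l := map (fun x => (kg x).1) (filter (fun x => (kg x).2 == g0) s).
have nd : List.NoDup l.
  apply: uniq_NoDup_map; first by rewrite filter_uniq.
  move=> x y; rewrite !mem_filter => /andP[/eqP ex xs] /andP[/eqP ey ys] e.
  have [_ ex'] := kgP (sH x xs); have [_ ey'] := kgP (sH y ys).
  by rewrite ex' ey' e ex ey.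
have h := @jinj l (fun k => bsel c (j k * g0)) nd.
have : bsel c (j (kg x0).1 * g0) = 0.
  apply: h.
    rewrite big_map big_filter -[RHS]hsum big_seq_cond [RHS]big_seq_cond.
    apply: eq_bigr => x /andP[xs /eqP ex].
    have [_ ex'] := kgP (sH x xs).
    by rewrite -ex -ex'.
  by apply: In_map_mem; rewrite mem_filter eqxx x0s.
have [_ e0] := kgP (sH x0 x0s).
rewrite -/g0 -e0 => b0.
by rewrite (bselP (cB x0 x0s)) b0 rmorph0.
Qed.

Lemma inD' : inD B' H'.
Proof. split; [exact: B'ring | exact: H'group | exact: H'surj | exact: H'inj]. Qed.

Lemma part1_contra (k1 : K) : k1 <> gone gK -> maximalD A G -> False.
Proof.
move=> nk1 [_ mx].
have [_ eqH] := mx B' H' inD' (conj (fun x xG => introT (inH' x) (ex_intro _ (gone gK) (ex_intro _ x (conj xG (esym (etrans (congr1 (fun t => t * x) j1) (mul1r x)))))))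
  (fun x xB => let: ex_intro b e := elimT (inB' x) xB in eq_ind_r (fun t => t \in A) (fA b) e)).
have k1G : j k1 \in G.
  rewrite -eqH; apply/inH'; exists k1, 1; by rewrite mulr1.
have jk1 : j k1 != 1.
  apply/eqP => e.
  have nd : List.NoDup [:: k1; gone gK].
    constructor; last by constructor; [done | constructor].
    by move=> [e'|//]; apply: nk1.
  have := @jinj [:: k1; gone gK] (fun k => if pb (k = k1) then 1 else -1) nd.
  rewrite big_cons big_seq1.
  case: pbP => // _; case: pbP => [e'|_]; first by exfalso; apply: nk1.
  rewrite rmorph1 rmorphN1 e j1 mul1r mulN1r subrr => /(_ erefl k1 (or_introl erefl)).
  by case: pbP => // _ /eqP; rewrite oner_eq0.
have := @hinj [:: j k1; 1] (fun x => if x == 1 then j k1 else -1).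
rewrite /= in_cons in_nil orbF jk1 => /(_ isT).
have sub : {subset [:: j k1; 1] <= G}.
  by move=> x; rewrite !in_cons in_nil orbF => /orP[/eqP->|/eqP->].
move=> /(_ sub).
have cA : {in [:: j k1; 1], forall g, (if g == 1 then j k1 else -1) \in A}.
  move=> x _; case: (x == 1); first exact: jA. by apply: (@scN _ A hA 1); exact: (sc1 hA).
move=> /(_ cA).
rewrite big_cons big_seq1 eqxx (negbTE jk1) mulN1r mulr1 addNr.
move=> /(_ erefl (j k1)); rewrite in_cons eqxx (negbTE jk1) => /(_ isT).
by move/eqP; rewrite oppr_eq0 oner_eq0.
Qed.
End Part1.


Section BT.
Variables (R : comNzRingType) (B : pred R) (hB : GRing.subring_closed B).
Definition Bkey : {pred R} := let _ := hB in B.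
HB.instance Definition _ := GRing.isSubringClosed.Build R Bkey hB.
Definition Btype := {x : R | x \in Bkey}.
HB.instance Definition _ := [isSub of Btype for (@sval R (fun x => x \in Bkey))].
HB.instance Definition _ := [Choice of Btype by <:].
HB.instance Definition _ := [SubChoice_isSubComNzRing of Btype by <:].
Definition fB : {rmorphism Btype -> R} := val.
Lemma fBE b : fB b = val b. Proof. by []. Qed.
Lemma fB_in (b : Btype) : fB b \in B. Proof. exact: valP b. Qed.
Definition bK (x : R) : Btype := insubd 0 x.
Lemma bKE x : x \in B -> fB (bK x) = x.
Proof. by move=> h; rewrite fBE val_insubd; case: ifP => //; rewrite /Bkey h. Qed.
Lemma fB_inj b1 b2 : fB b1 = fB b2 -> b1 = b2.
Proof. exact: val_inj. Qed.
End BT.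

Section Part2.
Variables (R : comNzRingType) (A G : pred R) (HAG : inD A G).
Variables (B H : pred R) (HBH : inD B H).
Hypotheses (GH : {subset G <= H}) (BA : {subset B <= A}).

Let hA : GRing.subring_closed A := let: And4 h _ _ _ := HAG in h.
Let hG : unit_subgroup G := let: And4 _ h _ _ := HAG in h.
Let hsurjA : natmap_surj A G := let: And4 _ _ h _ := HAG in h.
Let hinjA : natmap_inj A G := let: And4 _ _ _ h := HAG in h.
Let hB : GRing.subring_closed B := let: And4 h _ _ _ := HBH in h.
Let hH : unit_subgroup H := let: And4 _ h _ _ := HBH in h.
Let hsurjB : natmap_surj B H := let: And4 _ _ h _ := HBH in h.
Let hinjB : natmap_inj B H := let: And4 _ _ _ h := HBH in h.
Let G1 : 1 \in G := let: And4 _ h _ _ := hG in h.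
Let GM : {in G &, forall x y, x * y \in G} := let: And4 _ _ h _ := hG in h.
Let GV : {in G, forall x, exists2 y, y \in G & x * y = 1} := let: And4 _ _ _ h := hG in h.
Let H1 : 1 \in H := let: And4 _ h _ _ := hH in h.
Let HM : {in H &, forall x y, x * y \in H} := let: And4 _ _ h _ := hH in h.
Let HV : {in H, forall x, exists2 y, y \in H & x * y = 1} := let: And4 _ _ _ h := hH in h.

Definition Rep (x a : R) := exists L, pok A G L /\ x = psum L /\ a = \sum_(i <- L) i.1.
Definition phi (x : R) : R := pickf 0 Rep x.

Lemma phi_rep x : Rep x (phi x).
Proof.
apply: (pickfP 0 Rep x).
have [L [ok e]] := surj_pairs hsurjA x.
by exists (\sum_(i <- L) i.1), L.
Qed.

Lemma phiP x a : Rep x a -> phi x = a.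
Proof.
have [L1 [ok1 [e1 ->]]] := phi_rep x; move=> [L2 [ok2 [e2 ->]]].
set L := L1 ++ map (fun i => (- i.1, i.2)) L2.
have okL : pok A G L.
  rewrite /pok all_cat; apply/andP; split; first exact: ok1.
  rewrite all_map; apply/allP => i iL /=.
  by have /andP[iA ->] := allP ok2 i iL; rewrite (scN hA).
have psL : psum L = 0.
  rewrite /psum big_cat big_map /=.
  under [X in _ + X]eq_bigr do rewrite mulNr.
  rewrite sumrN -[\sum_(i <- L1) i.1 * i.2]/(psum L1) -e1.
  by rewrite -[\sum_(i <- L2) i.1 * i.2]/(psum L2) -e2 subrr.
have := GI hA hinjA okL psL predT.
rewrite big_cat big_map /= sumrN => /eqP; rewrite subr_eq0 => /eqP.
done.
Qed.

Lemma phi_in x : phi x \in A.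
Proof.
have [L [ok [_ ->]]] := phi_rep x.
apply: (scSumSeq hA) => i iL _; by have /andP[] := allP ok i iL.
Qed.

Lemma phi_ag a y : a \in A -> y \in G -> phi (a * y) = a.
Proof.
move=> aA yG; apply: phiP; exists [:: (a, y)]; split; first by rewrite /pok /= aA yG.
by rewrite /psum !big_seq1.
Qed.

Lemma phi0 : phi 0 = 0.
Proof. by apply: phiP; exists [::]; rewrite /psum !big_nil. Qed.

Lemma phiD x y : phi (x + y) = phi x + phi y.
Proof.
have [L1 [ok1 [e1 a1]]] := phi_rep x; have [L2 [ok2 [e2 a2]]] := phi_rep y.
apply: phiP; exists (L1 ++ L2); split; first by rewrite /pok all_cat; apply/andP.
split; last by rewrite big_cat a1 a2.
by rewrite e1 e2 /psum big_cat.
Qed.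

Lemma phiM x y : phi (x * y) = phi x * phi y.
Proof.
have [L1 [ok1 [e1 a1]]] := phi_rep x; have [L2 [ok2 [e2 a2]]] := phi_rep y.
apply: phiP.
exists (map (fun p => (p.1.1 * p.2.1, p.1.2 * p.2.2)) [seq (i, k) | i <- L1, k <- L2]).
split.
  rewrite /pok all_map; apply/allP => p /allpairsP [[i k] [iL kL ->]] /=.
  have /andP[iA iG] := allP ok1 i iL; have /andP[kA kG] := allP ok2 k kL.
  by rewrite (scM hA) // GM.
rewrite a1 a2 e1 e2 /psum !big_map !big_allpairs /= !mulr_suml.
split; apply: eq_bigr => i _; rewrite mulr_sumr; apply: eq_bigr => k _ //.
by rewrite mulrACA.
Qed.

Lemma phi_sum (I : Type) (r : seq I) (F : I -> R) :
  phi (\sum_(i <- r) F i) = \sum_(i <- r) phi (F i).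
Proof.
elim: r => [|i r IH]; first by rewrite !big_nil phi0.
by rewrite !big_cons phiD IH.
Qed.

Lemma phi_g y : y \in G -> phi y = 1.
Proof. by move=> yG; rewrite -[y]mul1r (phi_ag (sc1 hA) yG). Qed.
Lemma phi_a a : a \in A -> phi a = a.
Proof. by move=> aA; rewrite -{1}[a]mulr1 (phi_ag aA G1). Qed.
Lemma phi_aM a x : a \in A -> phi (a * x) = a * phi x.
Proof. by move=> aA; rewrite phiM phi_a. Qed.

Definition sameC (x : R) : pred R := fun y => pb (exists2 u, u \in G & y = x * u).
Lemma sCP x y : reflect (exists2 u, u \in G & y = x * u) (sameC x y).
Proof. exact: pbP. Qed.
Lemma sC_refl x : sameC x x.
Proof. by apply/sCP; exists 1; rewrite ?mulr1. Qed.
Lemma sC_sym x y : sameC x y -> sameC y x.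
Proof.
move=> /sCP[u uG ->]; have [v vG uv] := GV uG.
by apply/sCP; exists v => //; rewrite -mulrA uv mulr1.
Qed.
Lemma sC_trans x y z : sameC x y -> sameC y z -> sameC x z.
Proof.
move=> /sCP[u uG ->] /sCP[v vG ->].
by apply/sCP; exists (u * v); rewrite ?GM // mulrA.
Qed.
Lemma sC_mull x x' y : sameC x x' -> sameC (y * x) (y * x').
Proof. by move=> /sCP[u uG ->]; apply/sCP; exists u; rewrite ?mulrA. Qed.
Lemma sC_mulr x x' y : sameC x x' -> sameC (x * y) (x' * y).
Proof. by rewrite ![_ * y]mulrC; apply: sC_mull. Qed.

Definition canon (x : R) : R := xchoose (ex_intro (fun y => sameC x y) x (sC_refl x)).
Lemma canon_sim x : sameC x (canon x).
Proof. exact: xchooseP. Qed.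
Lemma canon_eq x y : sameC x y -> canon x = canon y.
Proof.
move=> h; apply: eq_xchoose => z; apply/idP/idP => hz.
  exact: sC_trans (sC_sym h) hz.
exact: sC_trans h hz.
Qed.
Lemma canon_idem x : canon (canon x) = canon x.
Proof. by apply/esym/canon_eq/canon_sim. Qed.
Lemma canonH x : x \in H -> canon x \in H.
Proof. by move=> xH; have /sCP[u uG ->] := canon_sim x; rewrite HM // GH. Qed.
Lemma phi_canon x : phi (canon x) = phi x.
Proof. by have /sCP[u uG ->] := canon_sim x; rewrite phiM (phi_g uG) mulr1. Qed.

Notation Ktype := {x : R | (x \in H) && (canon x == x)}.

Lemma kone_prop : (canon 1 \in H) && (canon (canon 1) == canon 1).
Proof. by rewrite canonH // canon_idem eqxx. Qed.
Definition kone : Ktype := exist _ (canon 1) kone_prop.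
Definition toK (x : R) : Ktype := insubd kone (canon x).
Lemma val_toK x : x \in H -> val (toK x) = canon x.
Proof. by move=> xH; rewrite val_insubd canonH // canon_idem eqxx. Qed.
Lemma valKH (k : Ktype) : val k \in H.
Proof. by case: k => x /= /andP[]. Qed.
Lemma canon_val (k : Ktype) : canon (val k) = val k.
Proof. by case: k => x /= /andP[_ /eqP]. Qed.
Lemma toK_val (k : Ktype) : toK (val k) = k.
Proof. by apply: val_inj; rewrite val_toK ?valKH // canon_val. Qed.
Lemma toK_eq x y : sameC x y -> toK x = toK y.
Proof. by move=> h; rewrite /toK (canon_eq h). Qed.

Definition hinv (x : R) : R := pickf 1 (fun x y => y \in H /\ x * y = 1) x.
Lemma hinvP x : x \in H -> hinv x \in H /\ x * hinv x = 1.
Proof.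
move=> xH; apply: (pickfP 1 (fun x y => y \in H /\ x * y = 1) x).
by have [y yH e] := HV xH; exists y.
Qed.

Definition kmul (k1 k2 : Ktype) : Ktype := toK (val k1 * val k2).
Definition kinv (k : Ktype) : Ktype := toK (hinv (val k)).

Lemma kmulA x y z : kmul x (kmul y z) = kmul (kmul x y) z.
Proof.
rewrite /kmul !val_toK ?HM ?valKH //; apply: toK_eq.
apply: (@sC_trans _ (val x * (val y * val z))).
  exact/sC_mull/sC_sym/canon_sim.
by rewrite mulrA; apply/sC_mulr/canon_sim.
Qed.
Lemma kmul1 x : kmul (toK 1) x = x.
Proof.
rewrite /kmul val_toK //; rewrite -[RHS]toK_val; apply: toK_eq.
by rewrite -[X in sameC _ X]mul1r; apply/sC_mulr/sC_sym/canon_sim.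
Qed.
Lemma kmulV x : kmul (kinv x) x = toK 1.
Proof.
have [hiH hx] := hinvP (valKH x).
rewrite /kmul /kinv val_toK //; apply: toK_eq.
apply: (@sC_trans _ (hinv (val x) * val x)); first exact/sC_mulr/sC_sym/canon_sim.
by rewrite mulrC hx; exact: sC_refl.
Qed.

Definition gK : group_on Ktype := @GroupOn Ktype kmul (toK 1) kinv kmulA kmul1 kmulV.
Definition jK (k : Ktype) : R := phi (val k).

Lemma iso : group_ring_iso A gK (fB hB) jK.
Proof.
split.
- by move=> b; apply: BA; exact: (@fB_in _ _ hB b).
- by move=> k; exact: phi_in.
- split; last by rewrite /jK /= val_toK // phi_canon phi_g.
  by move=> x y; rewrite /jK /= /kmul val_toK ?HM ?valKH // phi_canon phiM.
- move=> t tA; have [L [ok e]] := surj_pairs hsurjB t.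
  exists (undup (map (fun i => toK i.2) L)),
         (fun k => \sum_(i <- L | toK i.2 == k) bK hB i.1).
  rewrite -(phi_a tA) e phi_sum (regroup (fun i => toK i.2)).
  apply: eq_bigr => k _; rewrite rmorph_sum mulr_suml big_seq_cond [RHS]big_seq_cond.
  apply: eq_bigr => i /andP[iL /eqP ik].
  have /andP[iB iH] := allP ok i iL.
  by rewrite (@bKE _ _ hB) // phi_aM ?BA // /jK -ik val_toK // phi_canon.
- move=> l c nd sum0 k0 k0l.
  have ul := NoDup_uniq nd; have k0l' := In_mem k0l.
  set x := \sum_(k <- l) fB hB (c k) * val k.
  have phx : phi x = 0.
    by rewrite phi_sum -[RHS]sum0; apply: eq_bigr => k _; rewrite phi_aM // BA // (@fB_in _ _ hB).
  have [M [okM [ex aM]]] := phi_rep x.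
  rewrite phx in aM.
  pose NB := pickf [::] (fun a N => pok B H N /\ a = psum N).
  have NBP : forall a, a \in A -> pok B H (NB a) /\ a = psum (NB a).
    move=> a aA; apply: (pickfP [::] (fun a N => pok B H N /\ a = psum N) a).
    have [N [okN eN]] := surj_pairs hsurjB a; by exists N.
  set P := [seq (fB hB (c k), val k) | k <- l] ++
    flatten [seq [seq (- n.1, n.2 * m.2) | n <- NB m.1] ++ NB m.1 | m <- M].
  have okP : pok B H P.
    rewrite /pok all_cat all_map; apply/andP; split.
      by apply/allP => k _ /=; rewrite (@fB_in _ _ hB) valKH.
    apply: all_flat => m mM; have /andP[mA mG] := allP okM m mM.
    have [okN _] := NBP _ mA.
    rewrite all_cat all_map; apply/andP; split; last exact: okN.
    apply/allP => n nN /=.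
    have /andP[nB nH] := allP okN n nN.
    by rewrite (scN hB) // HM // GH.
  have psP : psum P = 0.
    rewrite /psum big_cat big_map big_flatten big_map /= -/x.
    have -> : \sum_(j <- M) \sum_(i <- ([seq (- n.1, n.2 * j.2) | n <- NB j.1] ++ NB j.1)) i.1 * i.2
        = \sum_(j <- M) (- (j.1 * j.2) + j.1).
      apply: eq_big_seq => m mM; have /andP[mA mG] := allP okM m mM.
      have [_ eN] := NBP _ mA.
      rewrite big_cat big_map /=.
      under eq_bigr do rewrite mulNr mulrA.
      by rewrite sumrN -mulr_suml -/(psum (NB m.1)) -eN.
    by rewrite big_split /= sumrN -aM addr0 -[\sum_(j <- M) j.1 * j.2]/(psum M) -ex subrr.
  have := GI hB hinjB okP psP (fun y => canon y == val k0).
  rewrite big_cat big_map big_flatten big_map /=.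
  rewrite [X in _ + X]big1_seq ?addr0; last first.
    move=> m /andP[_ mM]; have /andP[mA mG] := allP okM m mM.
    rewrite big_cat big_map /= sumrN.
    have -> : \sum_(j <- NB m.1 | canon (j.2 * m.2) == val k0) j.1 =
              \sum_(j <- NB m.1 | canon j.2 == val k0) j.1.
      apply: eq_bigl => n; rewrite (@canon_eq (n.2 * m.2) n.2) //.
      by apply/sC_sym/sCP; exists m.2.
    by rewrite addNr.
  under eq_bigl do rewrite canon_val val_eqE.
  rewrite (uniq_pick _ ul k0l') => h.
  by apply: (@fB_inj _ _ hB); rewrite rmorph0 -h.
Qed.

Lemma HsubG : stark_in A -> {subset H <= G}.
Proof.
move=> st h0 h0H; apply/negPn/negP => h0G; apply: st.
exists (Btype hB), Ktype, gK, (fB hB), jK; split; last exact: iso.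
exists (toK h0) => /= e.
have := congr1 val e; rewrite !val_toK // => ec.
have : sameC 1 h0.
  apply: (sC_trans (canon_sim 1)); rewrite -ec; exact/sC_sym/canon_sim.
by move=> /sCP[u uG]; rewrite mul1r => eu; rewrite eu uG in h0G.
Qed.

End Part2.

Unset Implicit Arguments.


Theorem lemma5p14 (R : comNzRingType) (A G : pred R) (HAG : inD A G) :
  (maximalD A G -> stark_in A) /\
  (is_order R -> connected_ring R -> stark_in A -> maximalD A G).
Proof.
split.
  move=> mx [B0 [K [g [f [j [[k1 nk1] iso]]]]]].
  exact: (@part1_contra R A G HAG B0 K g f j iso k1 nk1 mx).
move=> _ _ st; split => // B H hBH [GH BA].
have HG := HsubG HAG hBH GH BA st.
case: (HAG) => hA [_ G1 _ _] hsA hiA; case: (hBH) => hB _ hsB hiB.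
split; last by move=> x; apply/idP/idP; [exact: HG | exact: GH].
move=> a; apply/idP/idP; first exact: BA.
move=> aA; have [L [ok e]] := surj_pairs hsB a.
set P := (a, 1) :: map (fun i => (- i.1, i.2)) L.
have okP : pok A G P.
  rewrite /pok /= aA G1 /= all_map; apply/allP => i iL /=.
  have /andP[iB iH] := allP ok i iL.
  by rewrite (scN hA) ?BA // HG.
have psP : psum P = 0.
  rewrite /psum big_cons big_map /= mulr1.
  under eq_bigr do rewrite mulNr.
  by rewrite sumrN -[\sum_(i <- L) i.1 * i.2]/(psum L) -e subrr.
have := GI hA hiA okP psP (pred1 1).
rewrite big_cons /= eqxx big_map /= sumrN => /eqP; rewrite subr_eq0 => /eqP ->.
apply: (scSumSeq hB) => i iL _; by have /andP[] := allP ok i iL.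
Qed.
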